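(* Let $n, M \ge 2$ be integers and let $W_1, \dots, W_M \in \mathbb{R}^{n \times n}$ be weighted adjacency matrices (nonnegative entries) of a time-evolving graph on the fixed vertex set $\{v_1, \dots, v_n\}$, such that every row of each $W_t$ has positive sum. Let $S_t = D_t^{-1} W_t$, where $D_t = \mathrm{diag}\big(\sum_j (W_t)_{1j}, \dots, \sum_j (W_t)_{nj}\big)$. Let $\boldsymbol{\mu}_1 = \frac{1}{n}\mathbb{1}$ and $\boldsymbol{\mu}_{t+1} = S_t^\top \boldsymbol{\mu}_t$ for $t = 1, \dots, M-1$; assume all entries of $\boldsymbol{\mu}_t$ are strictly positive for all $t \in \{1,\dots,M\}$, and let $D_{\mu_t} = \mathrm{diag}(\boldsymbol{\mu}_t)$. Define $K_t = S_t$ and $T_t = D_{\mu_{t+1}}^{-1} S_t^\top D_{\mu_t}$ for $t = 1, \dots, M-1$, and let $\mathbf{C} \in \mathbb{R}^{nM \times nM}$ be the block matrix with $n\times n$ blocks $\mathbf{C}_{[s,r]}$ given by: $\mathbf{C}_{[1,2]} = K_1$; for $2 \le t \le M-1$, $\mathbf{C}_{[t,t-1]} = \tfrac12 T_{t-1}$ and $\mathbf{C}_{[t,t+1]} = \tfrac12 K_t$; $\mathbf{C}_{[M,M-1]} = T_{M-1}$; all other blocks zero. Let $\mathbf{L} = I - \mathbf{C}$ (the spatio-temporal graph Laplacian). Then all eigenvalues of $\mathbf{L}$ are real and contained in $[0, 2]$, and the spectrum of $\mathbf{L}$ is symmetric about $1$, i.e., if $\nu$ is an eigenvalue of $\mathbf{L}$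 then so is $2 - \nu$.
   Context: $I$ denotes the $nM \times nM$ identity matrix. *)

(* Defs.v *)
From HB Require Import structures.
From mathcomp Require Import all_boot all_order all_algebra.
From mathcomp Require Import complex.
From mathcomp Require Import reals.

Set Implicit Arguments.
Unset Strict Implicit.
Unset Printing Implicit Defensive.

Import Order.TTheory GRing.Theory Num.Theory.
Local Open Scope ring_scope.

(* Conventions: time indices are 1-based natural numbers t = 1..M,
   W : nat -> 'M[R]_n gives the adjacency matrices W_t (only t in 1..M
   matter).  Vectors mu_t are column vectors 'cV_n. *)

Section STGL.
Variables (R : realType) (n M : nat) (W : nat -> 'M[R]_n).

Definition Dmat (t : nat) : 'M[R]_n :=
  diag_mx (\row_i (\sum_j W t i j)).

Definition Smat (t : nat) : 'M[R]_n := invmx (Dmat t) *m W t.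

(* mu_aux k = mu_{k+1}:  mu_1 = (1/n) 1,  mu_{t+1} = S_t^T mu_t *)
Fixpoint mu_aux (k : nat) : 'cV[R]_n :=
  match k with
  | 0 => const_mx (n%:R^-1)
  | k'.+1 => (Smat k'.+1)^T *m mu_aux k'
  end.

Definition mu (t : nat) : 'cV[R]_n := mu_aux t.-1.

Definition Dmu (t : nat) : 'M[R]_n := diag_mx (mu t)^T.

Definition Kmat (t : nat) : 'M[R]_n := Smat t.

Definition Tmat (t : nat) : 'M[R]_n :=
  invmx (Dmu t.+1) *m (Smat t)^T *m Dmu t.

(* Block (s, r) of C, with 0-based block indices s r : 'I_M
   (paper's block [s+1, r+1]). *)
Definition Cblock (s r : 'I_M) : 'M[R]_n :=
  if (s == 0%N :> nat) && (r == 1%N :> nat) then Kmat 1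
  else if (s == M.-1 :> nat) && (r.+1 == s :> nat) then Tmat M.-1
  else if (r.+1 == s :> nat) then 2%:R^-1 *: Tmat s
  else if (r == s.+1 :> nat) then 2%:R^-1 *: Kmat s.+1
  else 0.

(* C in R^{nM x nM}, as an M x M block matrix with n x n blocks;
   its size \sum_(s < M) n equals n * M. *)
Definition Cmat : 'M[R]_(\sum_(s < M) n) := \mxblock_(s < M, r < M) Cblock s r.

Definition Lmat : 'M[R]_(\sum_(s < M) n) := 1%:M - Cmat.

End STGL.

Lemma Lsize_eq (n M : nat) : (\sum_(s < M) n)%N = (n * M)%N.
Proof. by rewrite sum_nat_const card_ord mulnC. Qed.

(* Main.v *)
Require Import Defs.
From HB Require Import structures.
From mathcomp Require Import all_boot all_order all_algebra.
From mathcomp Require Import complex.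
From mathcomp Require Import reals.
From mathcomp Require Import ring lra zify.
Import Order.TTheory GRing.Theory Num.Theory.
Local Open Scope ring_scope.

Section Generic.
Variable R : realType.
Local Notation toC := (fun x : R => x%:C%C).

Lemma mulmx_entry N (v : 'rV[R[i]]_N) (A : 'M[R]_N) l :
  (v *m map_mx toC A) 0 l = \sum_k v 0 k * (A k l)%:C%C.
Proof. by rewrite !mxE; apply: eq_bigr => k _; rewrite mxE. Qed.

Lemma row_nz N (v : 'rV[R[i]]_N) : v != 0 -> exists k, v 0 k != 0.
Proof.
move=> vn0; case: (pickP (fun k => v 0 k != 0)) => [k hk|H]; first by exists k.
move: vn0; have -> : v = 0; last by rewrite eqxx.
by apply/rowP => k; rewrite mxE; move: (H k) => /negbFE/eqP.
Qed.

Lemma eig_real N (A : 'M[R]_N) (d : 'I_N -> R) :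
  (forall k, 0 < d k) -> (forall k l, d k * A k l = d l * A l k) ->
  forall (v : 'rV[R[i]]_N) lam, v != 0 -> v *m map_mx toC A = lam *: v ->
  exists a : R, lam = a%:C%C.
Proof.
move=> dpos hsym v lam vn0 ev.
have eq_l l : \sum_k v 0 k * (A k l)%:C%C = lam * v 0 l.
  by rewrite -mulmx_entry ev mxE.
pose P k l := (A k l / d l)%:C%C.
have Psym k l : P k l = P l k.
  rewrite /P; congr (_%:C)%C.
  have hk := lt0r_neq0 (dpos k); have hl := lt0r_neq0 (dpos l).
  have -> : A k l = d l * A l k / d k by rewrite -hsym mulrAC mulfV // mul1r.
  by field; apply/andP.
have PJ k l : conjc (P k l) = P k l by exact: conjc_real.
have cJ3 (x y z : R[i]) : conjc (x * y * z) = conjc x * conjc y * conjc z by rewrite !rmorphM.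
have cJs (F : 'I_N -> R[i]) : conjc (\sum_k F k) = \sum_k conjc (F k) by rewrite rmorph_sum.
pose S := \sum_k \sum_l v 0 k * conjc (v 0 l) * P k l.
pose Q := \sum_l v 0 l * conjc (v 0 l) / (d l)%:C%C.
have SQ : S = lam * Q.
  rewrite /S exchange_big /Q mulr_sumr; apply: eq_bigr => l _.
  rewrite !mulrA -eq_l mulr_suml mulr_suml; apply: eq_bigr => k _.
  by rewrite /P rmorphM fmorphV /=; ring.
have SJ : conjc S = S.
  rewrite /S cJs exchange_big; apply: eq_bigr => l _.
  rewrite cJs; apply: eq_bigr => k _.
  by rewrite cJ3 conjcK PJ (Psym l k) [_ * v 0 k]mulrC.
have QJ : conjc Q = Q.
  rewrite /Q cJs; apply: eq_bigr => l _.
  by rewrite cJ3 conjcK -fmorphV conjc_real [_ * v 0 l]mulrC.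
have Qn0 : Q != 0.
  apply/negP => /eqP Q0.
  have ge0 l : true -> 0 <= v 0 l * conjc (v 0 l) / (d l)%:C%C.
    move=> _; apply: mulr_ge0; first exact: mulcJ_ge0.
    by rewrite invr_ge0 ler0c; apply/ltW.
  have [k vk] := @row_nz _ _ vn0.
  have := psumr_eq0P ge0 Q0 (i:=k) isT.
  move/eqP; rewrite !mulf_eq0 invr_eq0 conjc_eq0 orbb (negbTE vk) /=.
  by move/eqP => [] /eqP; apply/negP; exact: lt0r_neq0 (dpos k).

have : conjc (lam * Q) = lam * Q by rewrite -SQ SJ.
rewrite rmorphM /= QJ.
move/(mulIf Qn0); case: lam {SQ ev eq_l} => a b /= [] hb; exists a.
have -> : b = 0 by lra.
by [].
Qed.

Lemma eig_bound N (A : 'M[R]_N) :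
  (forall k l, 0 <= A k l) -> (forall k, \sum_l A k l = 1) ->
  forall (v : 'rV[R[i]]_N) lam, v != 0 -> v *m map_mx toC A = lam *: v ->
  `|lam| <= 1.
Proof.
move=> Apos Asum v lam vn0 ev.
have eq_l l : \sum_k v 0 k * (A k l)%:C%C = lam * v 0 l.
  by rewrite -mulmx_entry ev mxE.
pose T := \sum_l `|v 0 l|.
have Tpos : 0 < T.
  have [k vk] := @row_nz _ _ vn0.
  rewrite lt_def; apply/andP; split; last by apply: sumr_ge0 => l _.
  apply/negP => /eqP T0.
  have := psumr_eq0P (fun l _ => normr_ge0 (v 0 l)) T0 (i:=k) isT.
  by move/eqP; rewrite normr_eq0 (negbTE vk).
rewrite -(ger_pMl _ Tpos).
have -> : `|lam| * T = \sum_l `|\sum_k v 0 k * (A k l)%:C%C|.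
  by rewrite /T mulr_sumr; apply: eq_bigr => l _; rewrite eq_l normrM.
apply: (@le_trans _ _ (\sum_l \sum_k `|v 0 k| * (A k l)%:C%C)).
  apply: ler_sum => l _; apply: le_trans (ler_norm_sum _ _ _) _.
  apply: ler_sum => k _; rewrite normrM (ger0_norm (x := (A k l)%:C%C)) //.
  by rewrite ler0c.
rewrite exchange_big /T le_eqVlt; apply/orP; left; apply/eqP.
apply: eq_bigr => k _; rewrite -mulr_sumr -rmorph_sum /= Asum.
by rewrite mulr1.
Qed.

Lemma eig_flip N (A : 'M[R]_N) (e : 'I_N -> R) :
  (forall k, e k != 0) -> (forall k l, e k * A k l = - (e l * A k l)) ->
  forall (v : 'rV[R[i]]_N) lam, v != 0 -> v *m map_mx toC A = lam *: v ->
  exists2 w : 'rV[R[i]]_N, w *m map_mx toC A = (- lam) *: w & w != 0.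
Proof.
move=> en0 he v lam vn0 ev.
have eq_l l : \sum_k v 0 k * (A k l)%:C%C = lam * v 0 l.
  by rewrite -mulmx_entry ev mxE.
exists (\row_k ((e k)%:C%C * v 0 k)).
  apply/rowP => l; rewrite mulmx_entry !mxE.
  transitivity (- (e l)%:C%C * \sum_k v 0 k * (A k l)%:C%C); last first.
    by rewrite eq_l; ring.
  rewrite mulr_sumr; apply: eq_bigr => k _; rewrite mxE.
  have := he k l => /(congr1 toC); rewrite !rmorphM rmorphN /= => h.
  by rewrite mulrAC h rmorphM /=; ring.
have [k vk] := @row_nz _ _ vn0.
apply/negP => /eqP /rowP /(_ k); rewrite !mxE.
move/eqP; rewrite mulf_eq0 (negbTE vk) orbF.
by move/eqP => [] /eqP; apply/negP.
Qed.

Lemma generic N (A : 'M[R]_N) (d e : 'I_N -> R) :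
  (forall k l, 0 <= A k l) -> (forall k, \sum_l A k l = 1) ->
  (forall k, 0 < d k) -> (forall k l, d k * A k l = d l * A l k) ->
  (forall k, e k != 0) -> (forall k l, e k * A k l = - (e l * A k l)) ->
  forall z : R[i],
    eigenvalue (map_mx toC (1%:M - A)) z ->
    (exists x : R, z = x%:C%C /\ 0 <= x <= 2) /\
    eigenvalue (map_mx toC (1%:M - A)) (2 - z).
Proof.
move=> Apos Asum dpos hsym en0 he z.
have mE : map_mx toC (1%:M - A) = 1%:M - map_mx toC A.
  apply/matrixP => i j; rewrite !mxE rmorphB /=; congr (_ - _).
  by case: (i == j); rewrite /= ?rmorph1 ?rmorph0.
have eqv (w : 'rV[R[i]]_N) c : (w *m map_mx toC (1%:M - A) = c *: w) <->
    (w *m map_mx toC A = (1 - c) *: w).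
  rewrite mE mulmxBr mulmx1 scalerBl scale1r; split => h.
    by rewrite -h opprB addrC subrK.
  by rewrite h opprB addrC subrK.
move=> /eigenvalueP [v /eqv ev vn0].
have [a ha] := @eig_real _ _ _ dpos hsym _ _ vn0 ev.
have hb := @eig_bound _ _ Apos Asum _ _ vn0 ev.
split.
  exists (1 - a); split.
    by rewrite rmorphB /= -ha rmorph1 opprB addrC subrK.
  move: hb; rewrite ha normc_def /= expr0n /= addr0 sqrtr_sqr.
  rewrite -(rmorph1 (real_complex R)) lecR ler_norml => /andP [h1 h2].
  apply/andP; split; lra.
have [w hw wn0] := @eig_flip _ _ _ en0 he _ _ vn0 ev.
apply/eigenvalueP; exists w => //; apply/eqv.
by rewrite hw; congr (_ *: _); ring.
Qed.
End Generic.

Lemma invdiag (F : fieldType) m (r : 'rV[F]_m) :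
  (forall i, r 0 i != 0) -> invmx (diag_mx r) = diag_mx (\row_i (r 0 i)^-1).
Proof.
move=> rn0.
have H : diag_mx r *m diag_mx (\row_i (r 0 i)^-1) = 1%:M.
  rewrite mulmx_diag; apply/matrixP => i j; rewrite !mxE.
  case: eqP => [->|]; last by rewrite mulr0n.
  by rewrite mulfV.
have U : diag_mx r \in unitmx.
  by case: (mulmx1_unit H).
by rewrite -[RHS]mul1mx -(mulVmx U) -mulmxA H mulmx1.
Qed.

Lemma scaleE (R : pzRingType) m (a : R) (A : 'M[R]_m) i j : (a *: A) i j = a * A i j.
Proof. by rewrite mxE. Qed.

Lemma sum_ind (F : nmodType) M m (x : F) :
  \sum_(r < M) (if (r : nat) == m then x else 0) = if (m < M)%N then x else 0.
Proof.
case: ltnP => hm.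
  rewrite (bigD1 (Ordinal hm)) //= eqxx big1 ?addr0 // => r.
  by rewrite -val_eqE /= => /negbTE ->.
by rewrite big1 // => r _; rewrite ifF //; apply/negbTE/eqP => h; move: (ltn_ord r); rewrite h ltnNge hm.
Qed.

Section Block.
Variables (R : realType) (n M : nat) (W : nat -> 'M[R]_n).

Definition ca (s : nat) : R := if s == 0%N then 1 else 2^-1.
Definition cb (s : nat) : R := if s == M.-1 then 1 else 2^-1.
Definition cc (s : nat) : R := if (s == 0%N) || (s == M.-1) then 1 else 2.

Lemma CblockE (s r : 'I_M) : Cblock W s r =
  if (r == s.+1 :> nat) then ca s *: Kmat W s.+1
  else if (s == r.+1 :> nat) then cb s *: Tmat W s else 0.
Proof.
rewrite /Cblock; case: s r => [s hs] [r hr] /=.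
have [hr1|hr1] := eqVneq r s.+1.
  subst r; rewrite (_ : (s.+2 == s) = false); last by apply/negbTE/eqP; lia.
  rewrite andbF /=.
  have [->|s0] := eqVneq s 0%N; first by rewrite /ca /= scale1r.
  by rewrite /ca (negbTE s0).
have [hs1|hs1] := eqVneq s r.+1.
  subst s; rewrite andbT /=.
  rewrite /cb; case: eqP => [<-|_]; by rewrite ?scale1r.
rewrite (_ : ((s == 0%N) && (r == 1%N)) = false); last first.
  by apply/negbTE/negP => /andP [/eqP ? /eqP ?]; subst; rewrite eqxx in hr1.
by rewrite andbF.
Qed.

Lemma cca s : (s.+1 < M)%N -> cc s * ca s = 1.
Proof.
move=> h; rewrite /cc /ca.
have [->|s0] := eqVneq s 0%N; first by rewrite /= mul1r.
rewrite /= (_ : (s == M.-1) = false); last by apply/negbTE/eqP; lia.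
by rewrite mulfV // pnatr_eq0.
Qed.

Lemma ccb s : (0 < s)%N -> (s < M)%N -> cc s * cb s = 1.
Proof.
move=> h0 h; rewrite /cc /cb.
rewrite (_ : (s == 0%N) = false); last by apply/negbTE/eqP; lia.
have [_|s0] := eqVneq s M.-1; first by rewrite /= mul1r.
by rewrite /= mulfV // pnatr_eq0.
Qed.

End Block.

Section Spec.
Variables (R : realType) (n M : nat) (W : nat -> 'M[R]_n).
Hypothesis HM : (2 <= M)%N.
Hypothesis Wpos : forall t, (1 <= t <= M)%N -> forall i j, 0 <= W t i j.
Hypothesis Wsum : forall t, (1 <= t <= M)%N -> forall i, 0 < \sum_j W t i j.
Hypothesis mupos : forall t, (1 <= t <= M)%N -> forall i, 0 < mu W t i 0.

Lemma SE t i j : (1 <= t <= M)%N -> Smat W t i j = W t i j / \sum_k W t i k.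
Proof.
move=> ht; rewrite /Smat /Dmat invdiag; last first.
  by move=> i'; rewrite mxE lt0r_neq0 // Wsum.
by rewrite mul_diag_mx !mxE mulrC.
Qed.

Lemma Sge0 t i j : (1 <= t <= M)%N -> 0 <= Smat W t i j.
Proof.
move=> ht; rewrite SE //; apply: divr_ge0; first exact: Wpos.
exact/ltW/Wsum.
Qed.

Lemma Ssum t i : (1 <= t <= M)%N -> \sum_j Smat W t i j = 1.
Proof.
move=> ht; rewrite (eq_bigr (fun j => W t i j / \sum_k W t i k)).
  by rewrite -mulr_suml mulfV // lt0r_neq0 // Wsum.
by move=> j _; rewrite SE.
Qed.

Lemma mu_rec t : (1 <= t)%N -> mu W t.+1 = (Smat W t)^T *m mu W t.
Proof. by case: t. Qed.

Lemma TE t i j : (1 <= t)%N -> (t < M)%N ->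
  Tmat W t i j = (mu W t.+1 i 0)^-1 * Smat W t j i * mu W t j 0.
Proof.
move=> h1 h2; rewrite /Tmat /Dmu invdiag; last first.
  by move=> i'; rewrite mxE lt0r_neq0 // mupos // h2.
by rewrite mul_mx_diag mul_diag_mx !mxE.
Qed.

Lemma Tge0 t i j : (1 <= t)%N -> (t < M)%N -> 0 <= Tmat W t i j.
Proof.
move=> h1 h2; rewrite TE //; apply: mulr_ge0; last first.
  by apply/ltW/mupos; rewrite h1 ltnW.
apply: mulr_ge0; last by apply: Sge0; rewrite h1 ltnW.
by rewrite invr_ge0; apply/ltW/mupos; rewrite h2.
Qed.

Lemma Tsum t i : (1 <= t)%N -> (t < M)%N -> \sum_j Tmat W t i j = 1.
Proof.
move=> h1 h2.
rewrite (eq_bigr (fun j => (mu W t.+1 i 0)^-1 * (Smat W t j i * mu W t j 0))).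
  rewrite -mulr_sumr.
  have -> : \sum_j Smat W t j i * mu W t j 0 = mu W t.+1 i 0.
    by rewrite mu_rec // mxE; apply: eq_bigr => j _; rewrite !mxE.
  by rewrite mulVf // lt0r_neq0 // mupos // h2.
by move=> j _; rewrite TE // mulrA.
Qed.


Lemma ca_ge0 s : 0 <= ca R s.
Proof. by rewrite /ca; case: ifP => _ //; rewrite invr_ge0 ler0n. Qed.
Lemma cb_ge0 s : 0 <= cb R M s.
Proof. by rewrite /cb; case: ifP => _ //; rewrite invr_ge0 ler0n. Qed.
Lemma cc_gt0 s : 0 < cc R M s.
Proof. by rewrite /cc; case: ifP => _ //; rewrite ltr0n. Qed.

Lemma B1 (s r : 'I_M) i j : 0 <= Cblock W s r i j.
Proof.
rewrite CblockE; case: ifP => [/eqP h1|_].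
  rewrite mxE; apply: mulr_ge0; first exact: ca_ge0.
  by apply: Sge0; have := ltn_ord r; lia.
case: ifP => [/eqP h2|_]; last by rewrite mxE.
rewrite mxE; apply: mulr_ge0; first exact: cb_ge0.
by apply: Tge0; have := ltn_ord s; lia.
Qed.

Lemma B2 (s : 'I_M) i : \sum_(r < M) \sum_j Cblock W s r i j = 1.
Proof.
have row r : \sum_j Cblock W s r i j =
    (if (r == s.+1 :> nat) then ca R s else 0) +
    (if (s == r.+1 :> nat) then cb R M s else 0).
  rewrite CblockE; case: ifP => [/eqP h1|h1].
    have -> : (s == r.+1 :> nat) = false by apply/negbTE/eqP; lia.
    under eq_bigr do rewrite mxE.
    rewrite -mulr_sumr /Kmat Ssum ?mulr1 ?addr0 //.
    by have := ltn_ord r; lia.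
  rewrite add0r; case: ifP => [/eqP h2|h2].
    under eq_bigr do rewrite mxE.
    by rewrite -mulr_sumr Tsum ?mulr1 //; have := ltn_ord s; lia.
  by rewrite big1 // => j _; rewrite mxE.
rewrite (eq_bigr _ (fun r _ => row r)) big_split /= !sum_ind.
have hs := ltn_ord s.
have [s0|s0] := eqVneq (s : nat) 0%N.
  rewrite s0 /= big1 ?addr0; last by move=> r _.
  by rewrite /ca /= ifT //; lia.
have -> : \sum_(r < M) (if (s == r.+1 :> nat) then cb R M s else 0) =
    \sum_(r < M) (if (r == s.-1 :> nat) then cb R M s else 0).
  apply: eq_bigr => r _; congr (if _ then _ else _).
  apply/eqP/eqP; lia.
rewrite sum_ind (ifT _ _ (_ : (s.-1 < M)%N)); last by lia.
rewrite /ca /cb (negbTE s0).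
have [hl|hl] := ltnP s.+1 M.
  rewrite (_ : (s == M.-1 :> nat) = false); last by apply/negbTE/eqP; lia.
  by field.
by rewrite ifT ?add0r //; apply/eqP; lia.
Qed.

Lemma B3a (s r : 'I_M) i j : (r : nat) = s.+1 ->
  cc R M s * mu W s.+1 i 0 * Cblock W s r i j =
  cc R M r * mu W r.+1 j 0 * Cblock W r s j i.
Proof.
move=> h; have hr := ltn_ord r.
rewrite !CblockE h eqxx.
have -> : (s == s.+2 :> nat) = false by apply/negbTE/eqP; lia.
rewrite !scaleE TE; [|lia|lia].
have ca1 : cc R M s * ca R s = 1 by apply: cca; lia.
have cb1 : cc R M s.+1 * cb R M s.+1 = 1 by apply: ccb; lia.
have hmu : mu W s.+2 j 0 != 0 by apply: lt0r_neq0; apply: mupos; lia.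
rewrite /Kmat.
transitivity (mu W s.+1 i 0 * Smat W s.+1 i j * (cc R M s * ca R s)).
  by ring.
transitivity (mu W s.+1 i 0 * Smat W s.+1 i j * (cc R M s.+1 * cb R M s.+1)
   * (mu W s.+2 j 0 / mu W s.+2 j 0)); last by ring.
by rewrite ca1 cb1 mulfV // !mulr1.
Qed.

Lemma B3 (s r : 'I_M) i j :
  cc R M s * mu W s.+1 i 0 * Cblock W s r i j =
  cc R M r * mu W r.+1 j 0 * Cblock W r s j i.
Proof.
have [h|h] := eqVneq (r : nat) s.+1; first exact: B3a.
have [h'|h'] := eqVneq (s : nat) r.+1; first by rewrite (@B3a r s j i h').
by rewrite !CblockE (negbTE h) (negbTE h') !mxE !mulr0.
Qed.

Lemma B4 (s r : 'I_M) i j :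
  (-1) ^+ s * Cblock W s r i j = - ((-1) ^+ r * Cblock W s r i j).
Proof.
rewrite CblockE; case: ifP => [/eqP ->|_].
  by rewrite exprS; ring.
case: ifP => [/eqP ->|_]; last by rewrite mxE !mulr0 oppr0.
by rewrite exprS; ring.
Qed.

End Spec.

Section Main.
Variables (R : realType) (n M : nat) (W : nat -> 'M[R]_n).
Hypothesis HM : (2 <= M)%N.
Hypothesis Wpos : forall t, (1 <= t <= M)%N -> forall i j, 0 <= W t i j.
Hypothesis Wsum : forall t, (1 <= t <= M)%N -> forall i, 0 < \sum_j W t i j.
Hypothesis mupos : forall t, (1 <= t <= M)%N -> forall i, 0 < mu W t i 0.

Lemma main (z : R[i]) :
    eigenvalue (map_mx (fun x : R => x%:C%C) (Lmat M W)) z ->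
    (exists x : R, z = x%:C%C /\ 0 <= x <= 2) /\
    eigenvalue (map_mx (fun x : R => x%:C%C) (Lmat M W)) (2 - z).
Proof.
pose d (k : 'I_(\sum_(s < M) n)) :=
  cc R M (tagnat.sig1 k) * mu W (tagnat.sig1 k).+1 (tagnat.sig2 k) 0.
pose e (k : 'I_(\sum_(s < M) n)) : R := (-1) ^+ (tagnat.sig1 k).
have CE k l : Cmat M W k l =
    Cblock W (tagnat.sig1 k) (tagnat.sig1 l) (tagnat.sig2 k) (tagnat.sig2 l).
  by rewrite /Cmat mxE.
apply: (@generic R _ (Cmat M W) d e).
- by move=> k l; rewrite CE; apply: B1.
- move=> k; under eq_bigr do rewrite CE.
  pose G (p : {r : 'I_M & 'I_n}) :=
    Cblock W (tagnat.sig1 k) (tag p) (tagnat.sig2 k) (tagged p).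
  have -> : \sum_l Cblock W (tagnat.sig1 k) (tagnat.sig1 l) (tagnat.sig2 k) (tagnat.sig2 l)
      = \sum_l G (tagnat.sig l) by [].
  rewrite -(reindex _ tagnat.sig_bij_on) /G.
  rewrite -(sig_big_dep xpredT (fun _ => xpredT) (fun r (j : 'I_n) => Cblock W (tagnat.sig1 k) r (tagnat.sig2 k) j)).
  exact: B2.
- move=> k; apply: mulr_gt0; first exact: cc_gt0.
  by apply: mupos; have := ltn_ord (tagnat.sig1 k); lia.
- by move=> k l; rewrite !CE /d B3.
- by move=> k; rewrite /e expf_neq0 // oppr_eq0 oner_eq0.
- by move=> k l; rewrite CE /e B4.
Qed.
End Main.

Theorem corollary1 (R : realType) (n M : nat) (W : nat -> 'M[R]_n) :
  (2 <= n)%N -> (2 <= M)%N ->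
  (forall t : nat, (1 <= t <= M)%N -> forall i j : 'I_n, 0 <= W t i j) ->
  (forall t : nat, (1 <= t <= M)%N -> forall i : 'I_n, 0 < \sum_(j < n) W t i j) ->
  (forall t : nat, (1 <= t <= M)%N -> forall i : 'I_n, 0 < mu W t i 0) ->
  forall z : R[i],
    eigenvalue (map_mx (fun x : R => x%:C%C) (Lmat M W)) z ->
    (exists x : R, z = x%:C%C /\ 0 <= x <= 2) /\
    eigenvalue (map_mx (fun x : R => x%:C%C) (Lmat M W)) (2 - z).
Proof.
move=> _ HM Wpos Wsum mupos z; exact: main.
Qed.
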